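(* Let $G$ be a finite connected unweighted graph with graph distance $d$, fix a vertex $r$, and let $(a.b)_r=\tfrac12(d(a,r)+d(b,r)-d(a,b))$. For distinct vertices $x,y$ let $f(x,y)=\max_{x=w_1,\dots,w_k=y}\min_{1\le i\le k-1}(w_i.w_{i+1})_r$ (maximum over all finite vertex sequences from $x$ to $y$), and set $f(x,x)=d(x,r)$. Define $d'(x,y)=d(x,r)+d(y,r)-2f(x,y)$ and $(x.y)'_r=\tfrac12\big(d'(x,r)+d'(y,r)-d'(x,y)\big)$. Then: (1) $(x.y)'_r=f(x,y)$ for all vertices $x,y$; (2) $d'(x,y)=0$ (i.e. $x$ and $y$ are mapped to the same vertex of Gromov's distance approximating tree) if and only if $d(x,r)=d(y,r)=m$ for some $m$ and there exists a path $x=w_1,w_2,\dots,w_p=y$ in $G$ such that $d(w_i,r)\ge m$ for all $i$ and $\max\{d(w_i,r),d(w_{i+1},r)\}>m$ for all $1\le i\le p-1$.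
   Context: Gromov's distance approximating tree identifies two vertices $x,y$ of $G$ exactly when $d'(x,y)=0$, where $d'$ is as defined in the claim. *)

(* Defs.v *)
From mathcomp Require Import all_boot all_order all_algebra.
Set Implicit Arguments. Unset Strict Implicit. Unset Printing Implicit Defensive.
Import Order.TTheory GRing.Theory Num.Theory.

(* A finite simple (unweighted) graph: vertex type T : finType with a
   symmetric irreflexive adjacency relation e. *)

Definition walk_len (T : finType) (e : rel T) (x y : T) (n : nat) : bool :=
  [exists p : n.-tuple T, path e x p && (last x p == y)].

(* graph distance: least length of a walk from x to y.  In a connected graph
   a shortest walk has length < #|T|, so the minimum below is exact. *)
Definition gdist (T : finType) (e : rel T) (x y : T) : nat :=
  \big[minn/#|T|]_(n < #|T| | walk_len e x y n) (n : nat).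

Local Open Scope ring_scope.

Definition gprod (T : finType) (e : rel T) (r a b : T) : rat :=
  ((gdist e a r)%:R + (gdist e b r)%:R - (gdist e a b)%:R) / 2%:R.

(* min_{i} g(w_i, w_{i+1}) along the sequence x :: s (s nonempty);
   value on s = [::] is irrelevant (0). *)
Fixpoint chain_min (T : Type) (g : T -> T -> rat) (x : T) (s : seq T) : rat :=
  match s with
  | [::] => 0
  | [:: y] => g x y
  | y :: s' => Num.min (g x y) (chain_min g y s')
  end.

Definition is_maxmin_f (T : finType) (e : rel T) (r : T) (f : T -> T -> rat) : Prop :=
  (forall x y : T, x != y ->
     (exists s : seq T, s != [::] /\ last x s = y /\ chain_min (gprod e r) x s = f x y) /\
     (forall s : seq T, s != [::] -> last x s = y -> chain_min (gprod e r) x s <= f x y)) /\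
  (forall x : T, f x x = (gdist e x r)%:R).

Definition dprime (T : finType) (e : rel T) (r : T) (f : T -> T -> rat) (x y : T) : rat :=
  (gdist e x r)%:R + (gdist e y r)%:R - 2%:R * f x y.

Definition gprod' (T : finType) (e : rel T) (r : T) (f : T -> T -> rat) (x y : T) : rat :=
  (dprime e r f x r + dprime e r f y r - dprime e r f x y) / 2%:R.

(* Main.v *)
Require Import Defs.
From mathcomp Require Import all_boot all_order all_algebra.
From mathcomp Require Import zify ring lra.
Import Order.TTheory GRing.Theory Num.Theory.
Set Implicit Arguments. Unset Strict Implicit.

Lemma bigmin_le (I:eqType) (r: seq I) (P : pred I) (F : I -> nat) idx j :
  j \in r -> P j -> (\big[minn/idx]_(i <- r | P i) F i <= F j)%N.
Proof.
elim: r => //= a r IH; rewrite inE big_cons => /orP[/eqP<-|jr] Pj.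
  by rewrite Pj geq_minl.
case: ifP => _; last exact: IH.
by rewrite geq_min IH // orbT.
Qed.

Section G.
Variables (T : finType) (e : rel T).
Hypothesis e_sym : symmetric e.
Hypothesis e_conn : forall x y : T, connect e x y.

Lemma short x p : path e x p -> exists p', [/\ path e x p', last x p' = last x p,
   (size p' <= size p)%N & (size p' < #|T|)%N].
Proof.
move=> pp.
case: (shortenP pp) => p' pp' up' subp'.
exists p'; split => //.
  apply: uniq_leq_size => //. by case/andP: up'.
have := card_uniqP up'; rewrite /= => h.
by have := max_card (mem (x :: p')); rewrite h.
Qed.

Lemma gdist_le x y p : path e x p -> last x p = y -> (gdist e x y <= size p)%N.
Proof.
move=> pp <-.
case: (short pp) => p' [pp' lp' sz lt].
apply: leq_trans sz.
rewrite /gdist -lp'.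
have := @bigmin_le _ (index_enum 'I_#|T|) (fun n : 'I_#|T| => walk_len e x (last x p') n)
   (fun n => n) #|T| (Ordinal lt).
apply; first by rewrite mem_index_enum.
apply/existsP; exists (in_tuple p'); by rewrite /= pp' eqxx.
Qed.

Lemma gdist_walk x y : exists p, [/\ path e x p, last x p = y & size p = gdist e x y].
Proof.
have [p pp ->] := connectP (e_conn x y).
have [p' [pp' lp' _ lt]] := short pp.
have le : (gdist e x (last x p) < #|T|)%N.
  apply: leq_ltn_trans lt; exact: gdist_le.
have : gdist e x (last x p) = #|T| \/ walk_len e x (last x p) (gdist e x (last x p)).
  rewrite /gdist; apply: (big_ind (fun v => v = #|T| \/ walk_len e x (last x p) v)); [by left| |by move=> i ?; right].
  move=> a b Ha Hb; rewrite /minn; case: ifP => _; by [].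
case=> [h|]; first by rewrite h ltnn in le.
case/existsP=> q /andP[pq /eqP lq]; exists q; split => //; exact: size_tuple.
Qed.

Lemma gdist_xx x : gdist e x x = 0%N.
Proof. by apply/eqP; rewrite -leqn0; apply: (@gdist_le x x [::]). Qed.

Lemma gdist_sym x y : gdist e x y = gdist e y x.
Proof.
suff H : forall x y, (gdist e x y <= gdist e y x)%N by apply/eqP; rewrite eqn_leq !H.
move=> a b; have [p [pp lp sp]] := gdist_walk b a.
rewrite -sp.
have : path e a (rev (belast b p)).
  rewrite -lp rev_path; apply: sub_path pp => u v; by rewrite e_sym.
move=> h; apply: leq_trans (gdist_le h _) _.
  case/lastP: p lp {pp sp h} => [|q z] /=; first by move->.
  by move=> _; rewrite belast_rcons rev_cons last_rcons.
by rewrite size_rev size_belast.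
Qed.

Lemma gdist_tri x y z : (gdist e x z <= gdist e x y + gdist e y z)%N.
Proof.
have [p [pp lp sp]] := gdist_walk x y.
have [q [pq lq sq]] := gdist_walk y z.
rewrite -sp -sq -size_cat; apply: gdist_le.
  by rewrite cat_path pp lp pq.
by rewrite last_cat lp.
Qed.

Lemma gdist_edge x y : e x y -> (gdist e x y <= 1)%N.
Proof. move=> h; apply: (@gdist_le x y [:: y]) => //=; by rewrite h. Qed.


Lemma walk_good r m b : forall p a, path e a p -> last a p = b ->
  (2 * m + size p <= gdist e a r + gdist e b r)%N ->
  path (fun a b => e a b && (m < maxn (gdist e a r) (gdist e b r))%N) a p
  && all (fun w => (m <= gdist e w r)%N) (a :: p).
Proof.
elim=> [|z p IH] a /=.
  by move=> _ <- h; rewrite andbT; lia.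
move=> /andP[eaz pz] lz h.
have h1 := gdist_tri a z r.
have h1' := gdist_edge eaz.
have h2 := gdist_tri b a r.
have h2' : (gdist e a b <= (size p).+1)%N.
  by apply: (@gdist_le a b (z :: p)) => //=; rewrite eaz pz.
have h3 := gdist_tri b z r.
have h3' : (gdist e z b <= size p)%N by apply: gdist_le.
rewrite (gdist_sym b a) in h2; rewrite (gdist_sym b z) in h3.
have /andP[IH1 IH2] := IH z pz lz ltac:(lia).
rewrite eaz IH1 /=; rewrite /= in IH2; rewrite IH2 andbT /=.
apply/andP; split; lia.
Qed.
End G.

Local Open Scope ring_scope.

Lemma chain_ge (U:eqType) (g : U->U->rat) (c : rat) : forall s x, s != [::] ->
  (c <= chain_min g x s) = path (fun a b => c <= g a b) x s.
Proof.
elim=> [|y s IH] x // _.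
case: s IH => [|z s] IH /=; first by rewrite andbT.
by rewrite le_min IH.
Qed.

Lemma chain_le (U:eqType) (g : U->U->rat) (h : U -> rat) :
  (forall a b, g a b <= h a) -> (forall a b, g a b <= h b) ->
  forall s x, s != [::] -> chain_min g x s <= h x /\ chain_min g x s <= h (last x s).
Proof.
move=> H1 H2; elim=> [|y s IH] x // _.
case: s IH => [|z s] IH /=; first by split.
have [i1 i2] := IH y isT.
by split; rewrite ge_min ?H1 ?i2 ?orbT.
Qed.

Section R.
Variables (T : finType) (e : rel T).
Hypothesis e_sym : symmetric e.
Hypothesis e_conn : forall x y : T, connect e x y.
Variable r : T.

Lemma gprod_ger (m:nat) a b : (m%:R <= gprod e r a b) =
   (2 * m + gdist e a b <= gdist e a r + gdist e b r)%N.
Proof.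
rewrite /gprod ler_pdivlMr ?ltr0n // lerBrDr -!natrM -!natrD ler_nat.
by rewrite mulnC.
Qed.

Lemma gprod_ge0 a b : 0 <= gprod e r a b.
Proof.
have := gprod_ger 0 a b; rewrite mulr0n => ->.
have := gdist_tri e_conn a r b; rewrite (gdist_sym e_sym e_conn r b); lia.
Qed.

Lemma gprod_le1 a b : gprod e r a b <= (gdist e a r)%:R.
Proof.
rewrite /gprod ler_pdivrMr ?ltr0n // lerBlDr -!natrM -!natrD ler_nat.
have := gdist_tri e_conn b a r; rewrite (gdist_sym e_sym e_conn b a); lia.
Qed.

Lemma gprod_le2 a b : gprod e r a b <= (gdist e b r)%:R.
Proof.
rewrite /gprod ler_pdivrMr ?ltr0n // lerBlDr -!natrM -!natrD ler_nat.
have := gdist_tri e_conn a b r; lia.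
Qed.


Definition Rm (m : nat) := (fun a b => e a b && (m < maxn (gdist e a r) (gdist e b r))%N).

Lemma build m : forall s x, path (fun a b => m%:R <= gprod e r a b) x s ->
  (m <= gdist e x r)%N -> exists p, [/\ path (Rm m) x p, last x p = last x s &
     all (fun w => (m <= gdist e w r)%N) (x :: p)].
Proof.
elim=> [|y s IH] x /=.
  by move=> _ hm; exists [::]; rewrite /= hm.
move=> /andP[hxy hs] hm; rewrite gprod_ger in hxy.
have [q [pq lq sq]] := gdist_walk e_conn x y.
have /andP[w1 w2] := walk_good e_sym e_conn (r:=r) (m:=m) pq lq ltac:(by rewrite sq).
have hmy : (m <= gdist e y r)%N.
  have := gdist_tri e_conn x y r; lia.
have [p2 [pp2 lp2 ap2]] := IH y hs hmy.
exists (q ++ p2); split.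
- by rewrite cat_path w1 lq pp2.
- by rewrite last_cat lq.
- move: w2 => /andP[h1 h2]; case/andP: ap2 => _ h3.
  rewrite /= h1 all_cat; exact: (introT andP (conj h2 h3)).
Qed.

Lemma conv m : forall p x, path (Rm m) x p -> all (fun w => (m <= gdist e w r)%N) (x :: p) ->
  path (fun a b => m%:R <= gprod e r a b) x p.
Proof.
elim=> //= z p IH x /andP[/andP[exz hm] pz] /and3P[hx hz hall].
rewrite IH ?hz // andbT gprod_ger.
have := gdist_edge exz; lia.
Qed.
End R.


Theorem mainTheorem2 (T : finType) (e : rel T)
  (e_sym : symmetric e) (e_irr : irreflexive e)
  (e_conn : forall x y : T, connect e x y)
  (r : T) (f : T -> T -> rat) (hf : is_maxmin_f e r f) :
  (forall x y : T, gprod' e r f x y = f x y) /\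
  (forall x y : T,
     dprime e r f x y = 0 <->
     exists m : nat,
       gdist e x r = m /\ gdist e y r = m /\
       exists p : seq T,
         path (fun a b => e a b && (m < maxn (gdist e a r) (gdist e b r))%N) x p /\
         last x p = y /\
         all (fun w => (m <= gdist e w r)%N) (x :: p)).
Proof.
move: hf => [hf1 hf2].
have g1 := gprod_le1 e_sym e_conn r.
have g2 := gprod_le2 e_conn r.
have fr : forall x, f x r = 0.
  move=> x; case: (eqVneq x r) => [->|xr]; first by rewrite hf2 gdist_xx.
  have [[s [sn [ls cs]]] _] := hf1 x r xr.
  rewrite -cs; apply/eqP; rewrite eq_le; apply/andP; split.
    have [_ h] := chain_le g1 g2 x sn.
    by rewrite ls gdist_xx in h.
  rewrite (chain_ge _ _ _ sn).
  elim: (s) (x) => //= y s' IH x'; by rewrite (gprod_ge0 e_sym e_conn) ?IH.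
split.
  move=> x y; rewrite /gprod' /dprime !fr gdist_xx.
  by field.
move=> x y; case: (eqVneq x y) => [<-|xy].
  rewrite /dprime hf2; split => _.
    exists (gdist e x r); split; first done; split; first done.
    by exists [::]; rewrite /= leqnn.
  ring.
have [[s [sn [ls cs]]] hmax] := hf1 x y xy.
have [c1 c2] := chain_le g1 g2 x sn; rewrite ls cs in c2; rewrite cs in c1.
rewrite /dprime; split.
  move=> h0.
  have eqx : (gdist e x r)%:R = f x y :> rat by lra.
  have eqy : (gdist e y r)%:R = f x y :> rat by lra.
  exists (gdist e x r).
  have hy : gdist e y r = gdist e x r.
    by apply/eqP; rewrite -(eqr_nat rat) eqx eqy.
  split; first done; split; first done.
  have : (gdist e x r)%:R <= chain_min (gprod e r) x s by rewrite cs eqx.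
  rewrite chain_ge // => hp.
  have [p [pp lp ap]] := build e_sym e_conn hp (leqnn _).
  by exists p; rewrite lp ls.
case=> m [hx [hy [p [pp [lp ap]]]]].
case: p pp lp ap => [|z p] pp lp ap.
  by rewrite -lp eqxx in xy.
have hc := hmax (z::p) isT lp.
have : m%:R <= chain_min (gprod e r) x (z::p).
  by rewrite chain_ge //; apply: conv.
rewrite hx hy in c1 c2 * => hm.
lra.
Qed.
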